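(* Let $k,n\in\mathbb N$ and $U\subset\mathrm{Sym}_n$. Let $\mathcal O(U)$ be the set of orbits of $\langle U\rangle$ on $\{1,\dots,n\}$. Then the number of involutions $\pi\in\mathrm{Sym}_n$ such that - $\pi$ commutes with every element of $U$, and - the induced action of $\pi$ on $\mathcal O(U)$ has exactly $k$ orbits of size $2$ is at most $2^n\,|\mathrm{Inv}_{|\mathcal O(U)|,k}|$.
   Context: Involutions here include the identity, i.e. all $\pi$ with $\pi^2=1$. A permutation commuting with $\langle U\rangle$ permutes the $\langle U\rangle$-orbits. $\mathrm{Inv}_{N,k}$ is the set of $\sigma\in\mathrm{Sym}_N$ with $\sigma^2=1$ and exactly $N-2k$ fixed points, i.e. with exactly $k$ two-cycles. *)

(* Defs.v *)
From mathcomp Require Import all_boot all_order all_fingroup.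
Set Implicit Arguments. Unset Strict Implicit. Unset Printing Implicit Defensive.
Local Open Scope group_scope.

Definition orbitsU (n : nat) (U : {set 'S_n}) : {set {set 'I_n}} :=
  orbit 'P <<U>> @: [set: 'I_n].

(* The set of orbits of size 2 of the action of <pi> on O(U), where pi acts
   on orbits by O |-> pi @: O (well defined when pi commutes with U). *)
Definition induced_two_orbits (n : nat) (U : {set 'S_n}) (p : 'S_n)
  : {set {set {set 'I_n}}} :=
  [set [set O; p @: O] | O : {set 'I_n} in orbitsU U & p @: O != O].

(* Inv_{N,k}: involutions of Sym_N with exactly k two-cycles,
   i.e. exactly 2k moved points. *)
Definition Inv (N k : nat) : {set 'S_N} :=
  [set s : 'S_N | (s * s == 1) && (#|[set x | s x != x]| == 2 * k)%N].

Definition good_invs (n k : nat) (U : {set 'S_n}) : {set 'S_n} :=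
  [set p : 'S_n | [&& p * p == 1,
                     [forall u in U, p * u == u * p] &
                     #|induced_two_orbits U p| == k]].

(* Main.v *)
Require Import Defs.
From mathcomp Require Import all_boot all_order all_fingroup.
Set Implicit Arguments. Unset Strict Implicit. Unset Printing Implicit Defensive.
Local Open Scope group_scope.

Section S.
Variables (n : nat) (U : {set 'S_n}).

Definition Orb (x : 'I_n) := orbit 'P <<U>> x.

Lemma commP (p : 'S_n) : [forall u in U, p * u == u * p] ->
  forall g, g \in <<U>> -> forall x, g (p x) = p (g x).
Proof.
move=> /forall_inP H g Hg x.
have pC : p \in 'C(<<U>>).
  rewrite cent_gen; apply/centP => u Hu; apply/eqP; by have := H u Hu.
move/centP: pC => /(_ g Hg) E.
by rewrite -!permM E.
Qed.

Lemma imset_orb (p : 'S_n) : [forall u in U, p * u == u * p] ->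
  forall x, p @: Orb x = Orb (p x).
Proof.
move=> H x; apply/setP => y; apply/imsetP/orbitP.
  case=> z /orbitP [g Hg <-] ->; exists g => //=; by rewrite /aperm commP.
case=> g Hg <-; exists (g x); first exact: mem_orbit.
by rewrite /= /aperm commP.
Qed.

Lemma inX O : (O \in orbitsU U) = [exists x, O == Orb x].
Proof.
apply/imsetP/existsP => [[x _ ->]|[x /eqP ->]]; exists x => //.
Qed.

Lemma pX (p : 'S_n) : [forall u in U, p * u == u * p] ->
  forall O, O \in orbitsU U -> p @: O \in orbitsU U.
Proof.
move=> H O; rewrite !inX => /existsP [x /eqP ->].
by apply/existsP; exists (p x); rewrite imset_orb.
Qed.

Lemma invol (p : 'S_n) : p * p == 1 -> forall O : {set 'I_n}, p @: (p @: O) = O.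
Proof.
move=> /eqP H O; rewrite -imset_comp.
rewrite (eq_imset (g := id)) ?imset_id // => x /=.
by rewrite -permM H perm1.
Qed.

Let X := orbitsU U.
Let N := #|X|.

Definition sfun (p : 'S_n) (i : 'I_N) : 'I_N :=
  enum_rank_in (enum_valP i) (p @: enum_val i).

Definition sig (p : 'S_n) : 'S_N := insubd (1 : 'S_N) [ffun i => sfun p i].

Lemma sigE (p : 'S_n) : [forall u in U, p * u == u * p] ->
  forall i, sig p i = sfun p i.
Proof.
move=> H i.
have inj : injectiveb [ffun i => sfun p i].
  apply/injectiveP => a b; rewrite !ffunE /sfun => E.
  have := congr1 enum_val E.
  rewrite !enum_rankK_in ?pX ?enum_valP // => /imset_inj.
  by move=> /(_ (@perm_inj _ p)) /enum_val_inj.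
by rewrite /sig -pvalE (insubdK (1 : 'S_N) inj) ffunE.
Qed.

Lemma sfunV (p : 'S_n) : [forall u in U, p * u == u * p] ->
  forall i, enum_val (sfun p i) = p @: enum_val i.
Proof. by move=> H i; rewrite /sfun enum_rankK_in ?pX ?enum_valP. Qed.

Lemma sig_Inv k (p : 'S_n) : p \in good_invs k U -> sig p \in Inv N k.
Proof.
rewrite inE => /and3P [pp pc /eqP pk].
rewrite inE; apply/andP; split.
  apply/eqP/permP => i; rewrite permM perm1 !sigE //.
  apply: enum_val_inj; by rewrite !sfunV // invol.
set M := [set O in X | p @: O != O].
have -> : #|[set x | sig p x != x]| = #|M|.
  rewrite -(card_imset _ (@enum_val_inj _ (mem X))).
  apply: eq_card => O; apply/imsetP/idP.
    case=> i; rewrite inE sigE // => Hi ->; rewrite inE enum_valP /=.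
    by apply: contra Hi => /eqP E; apply/eqP/enum_val_inj; rewrite sfunV // E.
  rewrite inE => /andP [OX HO]; exists (enum_rank_in OX O); last by rewrite enum_rankK_in.
  rewrite inE sigE //; apply: contra HO => /eqP E.
  by rewrite -{2}(enum_rankK_in OX OX) -E sfunV // enum_rankK_in.
have key : forall O Q : {set 'I_n}, Q \in [set O; p @: O] -> [set O; p @: O] = [set Q; p @: Q].
  move=> O Q; rewrite !inE => /orP [] /eqP ->; first by [].
  by rewrite invol // setUC.
have part : partition (induced_two_orbits U p) M.
  apply/and3P; split.
  - apply/eqP/setP => O; apply/bigcupP/idP.
      case=> B /imsetP [O' HO' ->]; move: HO'; rewrite !inE => /andP [O'X HO'].
      case/orP => /eqP ->; first by rewrite O'X.
      rewrite pX //= invol //; by rewrite eq_sym.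
    move=> OM; exists [set O; p @: O]; last by rewrite !inE eqxx.
    by apply/imsetP; exists O.
  - apply/trivIsetP => A B /imsetP [O HO ->] /imsetP [O' HO' ->] neq.
    apply/pred0P => Q /=; apply/negP => /andP [Q1 Q2].
    by move: neq; rewrite (key _ _ Q1) (key _ _ Q2) eqxx.
  - apply/imsetP => [[O _ E]].
    by move: E => /setP /(_ O); rewrite !inE eqxx.
rewrite (@card_uniform_partition _ 2 _ _ _ part) ?pk 1?mulnC //.
move=> B /imsetP [O]; rewrite inE => /andP [_ HO] ->.
by rewrite cards2 eq_sym HO.
Qed.

Definition R := [set x : 'I_n | [forall y in Orb x, (x <= y)%N]].

Lemma R_exists x : exists2 r, r \in R & x \in Orb r.
Proof.
case: (arg_minnP (fun y : 'I_n => y : nat) (orbit_refl 'P <<U>> x)) => r Hr Hmin.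
have E : Orb r = Orb x by apply/orbit_eqP.
exists r; last by rewrite /Orb orbit_sym.
rewrite inE; apply/forall_inP => y; rewrite E; exact: Hmin.
Qed.

Lemma R_uniq r r' : r \in R -> r' \in R -> r' \in Orb r -> r = r'.
Proof.
rewrite !inE => /forall_inP H /forall_inP H' Hr.
apply/val_inj/eqP; rewrite eqn_leq H //= H' // /Orb orbit_sym //.
Qed.

Lemma main k : (#|good_invs k U| <= 2 ^ n * #|Inv N k|)%N.
Proof.
pose F (p : 'S_n) := (sig p, p @: R).
rewrite -(card_in_imset (f := F)); last first.
  move=> p p' Hp Hp' [E1 E2].
  move: (Hp) (Hp'); rewrite !inE => /and3P [pp pc _] /and3P [pp' pc' _].
  have Eo : forall x, p @: Orb x = p' @: Orb x.
    move=> x.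
    have Ox : Orb x \in X by rewrite /X inX; apply/existsP; exists x.
    have := congr1 (fun s : 'S_N => enum_val (s (enum_rank_in Ox (Orb x)))) E1.
    by rewrite /= !sigE // !sfunV // enum_rankK_in.
  apply/permP => x.
  case: (R_exists x) => r rR xr.
  have Er : p r = p' r.
    have : p r \in p' @: R by rewrite -E2; apply: imset_f.
    case/imsetP => r' r'R Hr'.
    have : p r \in p' @: Orb r by rewrite -Eo; apply: imset_f; exact: orbit_refl.
    case/imsetP => y Hy Ey.
    have Ey' : r' = y by apply: (@perm_inj _ p'); rewrite -Hr' -Ey.
    by rewrite Hr' (R_uniq rR r'R) // Ey'.
  case/orbitP: xr => g Hg <-; by rewrite /= /aperm -(commP pc Hg) -(commP pc' Hg) Er.
rewrite mulnC -[n in (2 ^ n)%N]card_ord -cardsT -(card_powerset [set: 'I_n]) -cardsX.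
apply: subset_leq_card; apply/subsetP => _ /imsetP [p Hp ->].
by rewrite inE /= sig_Inv // powersetE subsetT.
Qed.

End S.

Theorem lemma3p1 (k n : nat) (U : {set 'S_n}) :
  (#|good_invs k U| <= 2 ^ n * #|Inv #|orbitsU U| k|)%N.
Proof. exact: main. Qed.
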